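(* Fix $m\in\mathbb N$. There is a constant $C_m>0$ such that for all $v,w\in F(t_1,t_2)$ with $|v|,|w|\le m$ and all $N\in\mathbb N$, the word $$\big[v(y_1,y_2),\,w(x_1,x_2)^N\big]\,\big[v(x_1,x_2),\,w(y_1,y_2)^N\big]^{-1}\in F(x_1,x_2,y_1,y_2)$$ represents the trivial element of $K$ and has area at most $C_m\cdot N^2$.
   Context: Let $F_2^{(a)},F_2^{(b)},F_2^{(c)}$ be free groups with bases $a_1,a_2$; $b_1,b_2$; $c_1,c_2$, let $\psi\colon F_2^{(a)}\times F_2^{(b)}\times F_2^{(c)}\to\mathbb Z^2$ send $a_i,b_i,c_i\mapsto e_i$, and $K=\ker\psi$. $K$ is generated by $x_i=a_ic_i^{-1}$, $y_i=b_ic_i^{-1}$ ($i=1,2$), with finite presentation $\langle x_1,x_2,y_1,y_2\mid [x_1,y_1],[x_2,y_2],[x_1^{\epsilon_1},y_2^{\epsilon_2}][x_2^{\epsilon_2},y_1^{\epsilon_1}]\ (\epsilon_1,\epsilon_2\in\{\pm1\})\rangle$, where $[g,h]=ghg^{-1}h^{-1}$. Area is with respect to this presentation: the least number of conjugates of relators or their inverses whose product is the given word in $F(x_1,x_2,y_1,y_2)$. For $w\in F(t_1,t_2)$, $w(u_1,u_2)$ is the image under $t_i\mapsto u_i$, and $|w|$ is word length. *)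

(* Defs.v *)
(* Free groups as words over signed letters; equality in the
   free group = equality of freely reduced forms. *)
From mathcomp Require Import all_boot.
Set Implicit Arguments. Unset Strict Implicit. Unset Printing Implicit Defensive.

(* A letter of F(g_0,...,g_{n-1}): (index, exponent sign); true = +1, false = -1. *)
Definition letter (n : nat) := ('I_n * bool)%type.
Definition word (n : nat) := seq (letter n).

Definition linv {n} (a : letter n) : letter n := (a.1, ~~ a.2).
Definition winv {n} (w : word n) : word n := rev (map linv w).

Fixpoint freered {n} (w : word n) : word n :=
  match w with
  | [::] => [::]
  | a :: s =>
      let r := freered s in
      match r with
      | b :: r' => if b == linv a then r' else a :: r
      | [::] => [:: a]
      end
  end.

Definition feq {n} (u v : word n) : Prop := freered u = freered v.

Definition wpow {n} (w : word n) (N : nat) : word n := flatten (nseq N w).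
Definition comm {n} (g h : word n) : word n := g ++ h ++ winv g ++ winv h.
Definition gpow {n} (w : word n) (e : bool) : word n := if e then w else winv w.
Definition gen {n} (i : 'I_n) : word n := [:: (i, true)].

(* w(u1,u2) : substitution t_1 |-> u1, t_2 |-> u2 for w in F(t1,t2) *)
Definition subst {m} (w : word 2) (u1 u2 : word m) : word m :=
  flatten [seq (let u := if nat_of_ord a.1 == 0 then u1 else u2 in
                if a.2 then u else winv u) | a <- w].

Definition x1 : word 4 := gen (@Ordinal 4 0 isT).
Definition x2 : word 4 := gen (@Ordinal 4 1 isT).
Definition y1 : word 4 := gen (@Ordinal 4 2 isT).
Definition y2 : word 4 := gen (@Ordinal 4 3 isT).

Definition relK : seq (word 4) :=
  [:: comm x1 y1; comm x2 y2] ++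
  [seq comm (gpow x1 e.1) (gpow y2 e.2) ++ comm (gpow x2 e.2) (gpow y1 e.1)
  | e <- [:: (true, true); (true, false); (false, true); (false, false)]].

Definition prod_conj (l : seq (word 4 * word 4 * bool)) : word 4 :=
  flatten [seq t.1.1 ++ gpow t.1.2 t.2 ++ winv t.1.1 | t <- l].

Definition area_le (w : word 4) (n : nat) : Prop :=
  exists l : seq (word 4 * word 4 * bool),
    all (fun t => t.1.2 \in relK) l /\ size l <= n /\ feq (prod_conj l) w.

Definition trivial_in_K (w : word 4) : Prop := exists n, area_le w n.

(* Main.v *)
Require Import Defs.
From HB Require Import structures.
From mathcomp Require Import all_boot all_order all_algebra zify generic_quotient.
From Stdlib Require Import ClassicalEpsilon.
Set Implicit Arguments. Unset Strict Implicit. Unset Printing Implicit Defensive.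
Import GRing.Theory.

Ltac gnorm := rewrite ?invgM ?invgK ?mulgA;
  repeat (rewrite ?mulgK ?mulgVK ?mulgV ?mulVg ?mul1g ?mulg1 ?invg1 ?mulgA).

Section Free.
Variable n : nat.
Implicit Types (a b : letter n) (u v w s : word n).

Definition step a (r : word n) : word n :=
  match r with
  | b :: r' => if b == linv a then r' else a :: r
  | [::] => [:: a]
  end.

Lemma freered_cons a s : freered (a :: s) = step a (freered s).
Proof. by []. Qed.

Lemma linvK a : linv (linv a) = a.
Proof. by case: a => i s; rewrite /linv /= negbK. Qed.

Fixpoint reduced (w : word n) : bool :=
  match w with
  | a :: ((b :: _) as s) => (b != linv a) && reduced s
  | _ => true
  end.

Lemma reduced_tail a s : reduced (a :: s) -> reduced s.
Proof. by case: s => // b s /andP[]. Qed.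

Lemma freered_reduced w : reduced (freered w).
Proof.
elim: w => //= a s IH; rewrite -/(freered s).
case E: (freered s) IH => [|b r] //= H.
case: ifP => [_|/negbT nb] /=; first exact: reduced_tail H.
by rewrite nb H.
Qed.

Lemma freered_id w : reduced w -> freered w = w.
Proof.
elim: w => //= a s IH H; rewrite -/(freered s) IH; last exact: reduced_tail H.
by case: s H {IH} => //= b s /andP[/negbTE -> _].
Qed.

Lemma freered_cancel a s : freered (a :: linv a :: s) = freered s.
Proof.
rewrite !freered_cons /=.
have R := freered_reduced s.
case E: (freered s) R => [|b r] R /=; first by rewrite eqxx.
rewrite linvK; case: eqP => [Eb|nb] /=.
  subst b; case: r E R => [|c r] E R //=.
  by case/andP: R => H _; rewrite (negbTE H).
by rewrite eqxx.
Qed.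

Lemma freered_catr u v : freered (u ++ v) = freered (u ++ freered v).
Proof.
elim: u => [|a u IH] /=; first by rewrite (freered_id (freered_reduced v)).
by rewrite -!/(freered _) IH.
Qed.

Lemma freered_step a r v : freered (a :: r ++ v) = freered (step a r ++ v).
Proof.
case: r => [|b r] //=.
case: eqP => [->|] //.
by rewrite -/(freered (a :: linv a :: r ++ v)) freered_cancel.
Qed.

Lemma freered_catl u v : freered (u ++ v) = freered (freered u ++ v).
Proof.
elim: u => [|a u IH] //=.
by rewrite -!/(freered _) IH -/(freered (a :: (freered u ++ v))) freered_step.
Qed.

Lemma freered_cat u v : freered (u ++ v) = freered (freered u ++ freered v).
Proof. by rewrite freered_catl freered_catr. Qed.

Lemma feq_refl u : feq u u. Proof. by []. Qed.
Lemma feq_sym u v : feq u v -> feq v u. Proof. by rewrite /feq. Qed.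
Lemma feq_trans u v w : feq u v -> feq v w -> feq u w.
Proof. by rewrite /feq => ->. Qed.

Lemma feq_cat u u' v v' : feq u u' -> feq v v' -> feq (u ++ v) (u' ++ v').
Proof. by rewrite /feq freered_cat (freered_cat u') => -> ->. Qed.

Lemma winv_cat u v : winv (u ++ v) = winv v ++ winv u.
Proof. by rewrite /winv map_cat rev_cat. Qed.

Lemma winvK u : winv (winv u) = u.
Proof.
rewrite /winv map_rev revK -map_comp.
by rewrite (eq_map (g := id)) ?map_id // => a /=; rewrite linvK.
Qed.

Lemma winv_cons a u : winv (a :: u) = winv u ++ [:: linv a].
Proof. by rewrite -cat1s winv_cat. Qed.

Lemma winv_nil : winv [::] = [::] :> word n. Proof. by []. Qed.

Lemma feq_cancel u : feq (u ++ winv u) [::].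
Proof.
elim: u => [|a u IH] //.
rewrite winv_cons /feq /= -/(freered _) catA freered_catl.
by move: IH; rewrite /feq => ->; rewrite /= eqxx.
Qed.

Lemma feq_cancel' u : feq (winv u ++ u) [::].
Proof. by have := feq_cancel (winv u); rewrite winvK. Qed.

Lemma feq_winv u v : feq u v -> feq (winv u) (winv v).
Proof.
move=> H.
apply: (@feq_trans _ (winv u ++ (v ++ winv v))).
  by rewrite /feq freered_catr feq_cancel cats0.
apply: (@feq_trans _ (winv u ++ (u ++ winv v))).
  by apply: feq_cat => //; apply: feq_cat.
by rewrite catA /feq freered_catl feq_cancel'.
Qed.

Lemma feq_insl x u y : feq (x ++ (u ++ winv u) ++ y) (x ++ y).
Proof. by apply: feq_cat => //; rewrite /feq freered_catl feq_cancel. Qed.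

Lemma feq_insl' x u y : feq (x ++ (winv u ++ u) ++ y) (x ++ y).
Proof. by apply: feq_cat => //; rewrite /feq freered_catl feq_cancel'. Qed.

End Free.

Section SecP2.

Implicit Types (u v w g : word 4) (l : seq (word 4 * word 4 * bool)).

Lemma prod_conj_cat l1 l2 : prod_conj (l1 ++ l2) = prod_conj l1 ++ prod_conj l2.
Proof. by rewrite /prod_conj map_cat flatten_cat. Qed.

Lemma prod_conj_cons t l : prod_conj (t :: l) = (t.1.1 ++ gpow t.1.2 t.2 ++ winv t.1.1) ++ prod_conj l.
Proof. by []. Qed.

Lemma area_le_feq w w' k : area_le w k -> feq w w' -> area_le w' k.
Proof. by case=> l [H1 [H2 H3]] E; exists l; split => //; split => //; apply: feq_trans E. Qed.

Lemma area_le_mono w k k' : k <= k' -> area_le w k -> area_le w k'.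
Proof. by move=> le [l [H1 [H2 H3]]]; exists l; split => //; split => //; apply: leq_trans le. Qed.

Lemma area_le_nil : area_le [::] 0.
Proof. by exists [::]. Qed.

Lemma area_le_cat w1 w2 k1 k2 : area_le w1 k1 -> area_le w2 k2 -> area_le (w1 ++ w2) (k1 + k2).
Proof.
case=> l1 [A1 [S1 F1]] [l2 [A2 [S2 F2]]]; exists (l1 ++ l2); split.
  by rewrite all_cat A1 A2.
split; first by rewrite size_cat leq_add.
by rewrite prod_conj_cat; apply: feq_cat.
Qed.

Lemma area_le_conj g w k : area_le w k -> area_le (g ++ w ++ winv g) k.
Proof.
case=> l [A [S F]].
exists [seq (g ++ t.1.1, t.1.2, t.2) | t <- l]; split.
  by rewrite all_map; apply: sub_all A => t.
split; first by rewrite size_map.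
have H : feq (prod_conj [seq (g ++ t.1.1, t.1.2, t.2) | t <- l]) (g ++ prod_conj l ++ winv g).
  elim: l {A S F} => [|t l IH] /=.
    by apply: feq_sym; apply: feq_cancel.
  rewrite !prod_conj_cons /= winv_cat.
  apply: (@feq_trans _ _ ((g ++ t.1.1 ++ gpow t.1.2 t.2 ++ winv t.1.1 ++ winv g) ++ (g ++ prod_conj l ++ winv g))).
    by apply: feq_cat => //; rewrite /feq -catA.
  move: (@feq_insl' _ (g ++ t.1.1 ++ gpow t.1.2 t.2 ++ winv t.1.1) g (prod_conj l ++ winv g)).
  by rewrite -!catA.
apply: feq_trans H _.
by apply: feq_cat => //; apply: feq_cat.
Qed.

Lemma winv_gpow (r : word 4) s : winv (gpow r s) = gpow r (~~ s).
Proof. by case: s => //=; rewrite winvK. Qed.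

Lemma area_le_winv w k : area_le w k -> area_le (winv w) k.
Proof.
case=> l [A [S F]].
exists (rev [seq (t.1.1, t.1.2, ~~ t.2) | t <- l]); split.
  by rewrite all_rev all_map; apply: sub_all A => t.
split; first by rewrite size_rev size_map.
have -> : prod_conj (rev [seq (t.1.1, t.1.2, ~~ t.2) | t <- l]) = winv (prod_conj l).
  elim: l {A S F} => [|t l IH] //=.
  have pc0 : prod_conj [::] = [::] by [].
  rewrite rev_cons -cats1 prod_conj_cat IH !prod_conj_cons pc0 cats0 winv_cat.
  by rewrite !winv_cat winvK winv_gpow -catA.
exact: feq_winv.
Qed.

Lemma area_le_rel r : r \in relK -> area_le r 1.
Proof.
move=> Hr; exists [:: ([::], r, true)]; split; first by rewrite /= Hr.
by split => //; rewrite /prod_conj /= !cats0.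
Qed.

Definition eqK k u v := area_le (u ++ winv v) k.

Lemma eqK_feq u v : feq u v -> eqK 0 u v.
Proof.
move=> E; apply: area_le_feq area_le_nil _.
apply: feq_sym; apply: (@feq_trans _ _ (v ++ winv v)); first by apply: feq_cat.
exact: feq_cancel.
Qed.

Lemma eqK_refl u : eqK 0 u u.
Proof. exact: eqK_feq. Qed.

Lemma eqK_mono k k' u v : k <= k' -> eqK k u v -> eqK k' u v.
Proof. exact: area_le_mono. Qed.

Lemma eqK_sym k u v : eqK k u v -> eqK k v u.
Proof. by move/area_le_winv; rewrite /eqK winv_cat winvK. Qed.

Lemma eqK_trans k1 k2 u v w : eqK k1 u v -> eqK k2 v w -> eqK (k1 + k2) u w.
Proof.
move=> H1 H2; apply: area_le_feq (area_le_cat H1 H2) _.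
rewrite -catA.
have := @feq_insl' _ u v (winv w); rewrite -!catA; apply.
Qed.

Lemma eqK_cat k1 k2 u u' v v' : eqK k1 u u' -> eqK k2 v v' -> eqK (k1 + k2) (u ++ v) (u' ++ v').
Proof.
move=> H1 H2; rewrite addnC.
apply: area_le_feq (area_le_cat (area_le_conj u H2) H1) _.
rewrite /eqK winv_cat -!catA.
have := @feq_insl' _ (u ++ v ++ winv v') u (winv u'); rewrite -!catA; apply.
Qed.

Lemma eqK_catl k u v v' : eqK k v v' -> eqK k (u ++ v) (u ++ v').
Proof. by move=> H; have := eqK_cat (eqK_refl u) H. Qed.

Lemma eqK_catr k u u' v : eqK k u u' -> eqK k (u ++ v) (u' ++ v).
Proof. by move=> H; have := eqK_cat H (eqK_refl v); rewrite addn0. Qed.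

Lemma eqK_trans_feq k u v w : eqK k u v -> feq v w -> eqK k u w.
Proof. by move=> H /eqK_feq H2; have := eqK_trans H H2; rewrite addn0. Qed.

Lemma eqK_feq_trans k u v w : feq u v -> eqK k v w -> eqK k u w.
Proof. by move=> /eqK_feq H1 H2; have := eqK_trans H1 H2. Qed.


Lemma eqK_winv k u v : eqK k u v -> eqK k (winv u) (winv v).
Proof.
move=> H; rewrite /eqK winvK.
have := area_le_conj (winv u) (area_le_winv H).
rewrite winv_cat winvK => H'.
apply: area_le_feq H' _.
have := @feq_insl _ (winv u ++ v) (winv u) [::]; rewrite !cats0 -!catA winvK; apply.
Qed.

Lemma eqK_wpow k u v N : eqK k u v -> eqK (N * k) (wpow u N) (wpow v N).
Proof.
move=> H; elim: N => [|N IH]; first exact: eqK_refl.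
by rewrite mulSn; apply: eqK_cat.
Qed.

End SecP2.

Definition eqG (u v : word 4) : Prop := exists k, eqK k u v.

Definition eqGb (u v : word 4) : bool :=
  if excluded_middle_informative (eqG u v) then true else false.

Lemma eqGbP u v : reflect (eqG u v) (eqGb u v).
Proof. by rewrite /eqGb; case: excluded_middle_informative => H; constructor. Qed.

Lemma eqGb_refl : reflexive eqGb.
Proof. by move=> u; apply/eqGbP; exists 0; apply: eqK_refl. Qed.
Lemma eqGb_sym : symmetric eqGb.
Proof.
by move=> u v; apply/eqGbP/eqGbP => -[k H]; exists k; apply: eqK_sym.
Qed.
Lemma eqGb_trans : transitive eqGb.
Proof.
move=> v u w /eqGbP[k1 H1] /eqGbP[k2 H2]; apply/eqGbP.
by exists (k1 + k2); apply: eqK_trans H1 H2.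
Qed.

Local Open Scope quotient_scope.
Canonical eqG_equiv := EquivRel eqGb eqGb_refl eqGb_sym eqGb_trans.

Definition Gq := {eq_quot eqGb}.
HB.instance Definition _ := Choice.on Gq.


Local Notation pi := (\pi_Gq).

Lemma piP u v : reflect (eqG u v) (pi u == pi v).
Proof.
apply: (iffP eqP) => H. apply/eqGbP. exact/(eqmodP eqG_equiv u v).
by apply/(eqmodP eqG_equiv u v); apply/eqGbP.
Qed.

Lemma pi_eq u v : eqG u v -> pi u = pi v.
Proof. by move/piP/eqP. Qed.

Lemma pi_feq u v : feq u v -> pi u = pi v.
Proof. by move=> H; apply: pi_eq; exists 0; apply: eqK_feq. Qed.

Definition gmul (a b : Gq) : Gq := pi (repr a ++ repr b).
Definition ginv (a : Gq) : Gq := pi (winv (repr a)).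
Definition gone : Gq := pi [::].

Lemma eqG_cat u u' v v' : eqG u u' -> eqG v v' -> eqG (u ++ v) (u' ++ v').
Proof. by case=> k1 H1 [k2 H2]; exists (k1 + k2); apply: eqK_cat. Qed.

Lemma eqG_winv u v : eqG u v -> eqG (winv u) (winv v).
Proof. by case=> k H; exists k; apply: eqK_winv. Qed.

Lemma repr_eqG u : eqG (repr (pi u)) u.
Proof. by apply/piP; rewrite reprK. Qed.

Lemma pi_cat u v : pi (u ++ v) = gmul (pi u) (pi v).
Proof.
apply: pi_eq; apply: eqG_cat.
  by case: (repr_eqG u) => k H; exists k; apply: eqK_sym.
by case: (repr_eqG v) => k H; exists k; apply: eqK_sym.
Qed.

Lemma pi_winv u : pi (winv u) = ginv (pi u).
Proof. by apply: pi_eq; apply: eqG_winv; case: (repr_eqG u) => k H; exists k; apply: eqK_sym. Qed.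

Lemma eqG_refl u : eqG u u. Proof. by exists 0; apply: eqK_refl. Qed.
Lemma eqG_sym u v : eqG u v -> eqG v u. Proof. by case=> k H; exists k; apply: eqK_sym. Qed.
Lemma eqG_trans u v w : eqG u v -> eqG v w -> eqG u w.
Proof. by case=> k H [k' H']; exists (k + k'); apply: eqK_trans H H'. Qed.

Lemma gmulA : associative gmul.
Proof.
move=> a b c; rewrite /gmul; apply: pi_eq.
apply: (@eqG_trans _ ((repr a ++ repr b) ++ repr c)).
  rewrite -catA; exact: eqG_cat (eqG_refl _) (repr_eqG _).
exact: eqG_cat (eqG_sym (repr_eqG _)) (eqG_refl _).
Qed.

Lemma gmul1 : left_id gone gmul.
Proof.
move=> a; rewrite /gmul /gone -{2}(reprK a); apply: pi_eq.
exact: (eqG_cat (repr_eqG [::]) (eqG_refl (repr a))).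
Qed.

Lemma gmul1r : right_id gone gmul.
Proof.
move=> a; rewrite /gmul /gone -{2}(reprK a); apply: pi_eq.
by have := eqG_cat (eqG_refl (repr a)) (repr_eqG [::]); rewrite cats0.
Qed.

Lemma gmulV : left_inverse gone ginv gmul.
Proof.
move=> a; rewrite /gmul /ginv /gone; apply: pi_eq.
apply: (@eqG_trans _ (winv (repr a) ++ repr a)).
  exact: eqG_cat (repr_eqG _) (eqG_refl _).
by exists 0; apply: eqK_feq; apply: feq_cancel'.
Qed.

Lemma gmulV' : right_inverse gone ginv gmul.
Proof.
move=> a; rewrite /gmul /ginv /gone; apply: pi_eq.
apply: (@eqG_trans _ (repr a ++ winv (repr a))).
  exact: eqG_cat (eqG_refl _) (repr_eqG _).
by exists 0; apply: eqK_feq; apply: feq_cancel.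
Qed.

HB.instance Definition _ := isGroup.Build Gq gmulA gmul1 gmul1r gmulV gmulV'.

Definition piG (u : word 4) : Gq := \pi_Gq u.
Open Scope group_scope.


Lemma piG_cat u v : piG (u ++ v) = piG u * piG v.
Proof. exact: pi_cat. Qed.
Lemma piG_winv u : piG (winv u) = (piG u)^-1.
Proof. exact: pi_winv. Qed.
Lemma piG_nil : piG [::] = 1.
Proof. by []. Qed.
Lemma piG_eqG u v : piG u = piG v -> eqG u v.
Proof. by move=> H; apply/piP; rewrite /piG in H; rewrite H. Qed.

Open Scope group_scope.




Section Grp.
Variable G : groupType.
Implicit Types x y a b g h k : G.

Definition cm x y : G := x * y * x^-1 * y^-1.

Lemma cmV a b : (cm a b)^-1 = cm b a.
Proof. rewrite /cm; gnorm; by []. Qed.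

Lemma G1 x a b : x * cm a b * x^-1 = cm (x * a) b * (cm x b)^-1.
Proof. rewrite /cm; gnorm; by []. Qed.

Lemma G2 y a b : y * cm a b * y^-1 = (cm a y)^-1 * cm a (y * b).
Proof. rewrite /cm; gnorm; by []. Qed.

Lemma G3 g h k : cm (g * h) k = g * cm h k * g^-1 * cm g k.
Proof. rewrite /cm; gnorm; by []. Qed.

Lemma G4 g h k : cm g (h * k) = cm g h * h * cm g k * h^-1.
Proof. rewrite /cm; gnorm; by []. Qed.

End Grp.

Section Zp.
Variable G : groupType.
Implicit Types x y a b : G.
Local Open Scope ring_scope.

Definition zp x (n : int) : G :=
  match n with Posz k => (x ^+ k)%g | Negz k => ((x ^+ k.+1)^-1)%g end.

Lemma zp0 x : zp x 0 = 1%g. Proof. by []. Qed.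
Lemma zp1 x : zp x 1 = x. Proof. by []. Qed.
Lemma zpN1 x : zp x (-1) = x^-1%g. Proof. by []. Qed.

Lemma zpD1 x n : zp x (n + 1) = (x * zp x n)%g.
Proof.
case: n => k.
  by rewrite -PoszD addn1 /= expgS.
case: k => [|k].
  by rewrite /= mulgV.
have -> : Negz k.+1 + 1 = Negz k by rewrite !NegzE; lia.
by rewrite /= (expgSr x k.+1) invgM mulgA mulgV mul1g.
Qed.

Lemma zpB1 x n : zp x (n - 1) = (x^-1 * zp x n)%g.
Proof.
have := zpD1 x (n - 1); rewrite subrK => ->.
by rewrite mulgA mulVg mul1g.
Qed.

Lemma int_ind2 (P : int -> Prop) :
  P 0 -> P 1 -> P (-1) ->
  (forall n, P (n - 1) -> P n -> P (n + 1)) ->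
  (forall n, P (n + 1) -> P n -> P (n - 1)) -> forall n, P n.
Proof.
move=> P0 P1 PN up dn.
have pos : forall k : nat, P k /\ P (k.+1).
  elim=> [|k [IH1 IH2]]; first by split.
  split => //.
  have := up k.+1; rewrite (_ : k.+1%:Z - 1 = k) ?IH1 ?IH2; last by lia.
  by rewrite (_ : k.+1%:Z + 1 = k.+2); [apply|lia].
have neg : forall k : nat, P (- k%:Z) /\ P (- k.+1%:Z).
  elim=> [|k [IH1 IH2]]; first by split.
  split => //.
  have := dn (- k.+1%:Z); rewrite (_ : - k.+1%:Z + 1 = - k%:Z); last by lia.
  by rewrite (_ : - k.+1%:Z - 1 = - k.+2%:Z); [move=> H; apply: H|lia].
case=> k; first by case: (pos k).
by rewrite NegzE; case: (neg k).
Qed.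

End Zp.

Section ConjE.
Variable G : groupType.
Implicit Types x y t c : G.

Lemma conjE x y t : x * t * x^-1 = y * t * y^-1 <-> commute (y^-1 * x) t.
Proof.
split=> H.
  rewrite /commute.
  have -> : y^-1 * x * t = y^-1 * (x * t * x^-1) * x by gnorm.
  by rewrite H; gnorm.
have -> : x * t * x^-1 = y * ((y^-1 * x) * t) * x^-1 by gnorm.
by rewrite H; gnorm.
Qed.

Lemma conjEV x y t : x^-1 * t * x = y^-1 * t * y <-> commute (y * x^-1) t.
Proof.
have := conjE x^-1 y^-1 t; rewrite !invgK => ->.
by [].
Qed.

Lemma commuteVl c t : commute c t -> commute c^-1 t.
Proof. by move=> H; apply: commute_sym; apply: commuteV; apply: commute_sym. Qed.

Lemma cz_swap x y t : commute x y -> commute (y^-1 * x) t -> commute (y * x^-1) t.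
Proof.
move=> Cxy H.
have -> : y * x^-1 = (y^-1 * x)^-1.
  rewrite invgM invgK.
  by apply: (mulgI x); apply: (mulIg x); gnorm; rewrite Cxy.
exact: commuteVl.
Qed.

Lemma cz_swap' x y t : commute x y -> commute (y * x^-1) t -> commute (y^-1 * x) t.
Proof.
move=> Cxy H.
have -> : y^-1 * x = (y * x^-1)^-1.
  rewrite invgM invgK.
  by apply: (mulgI y); apply: (mulIg y); gnorm; rewrite Cxy.
exact: commuteVl.
Qed.

Lemma commute_cm a t : commute a t -> commute a t^-1.
Proof. exact: commuteV. Qed.

End ConjE.

Section IndA.
Variable G : groupType.
Variables x y b b' : G.
Hypothesis Cxy : commute x y.
Local Open Scope ring_scope.

Let T n := cm (zp x n) b.
Let T' n := cm (zp y n) b'.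

Lemma FA n : (x * T n * x^-1 = T (n + 1) * (T 1)^-1)%g.
Proof. by rewrite /T /= G1 zpD1. Qed.

Lemma FAy n : (y * T' n * y^-1 = T' (n + 1) * (T' 1)^-1)%g.
Proof. by rewrite /T' /= G1 zpD1. Qed.

Lemma FB n : (x^-1 * T n * x = T (n - 1) * (T (-1))^-1)%g.
Proof. by rewrite /T /=; have := G1 x^-1 (zp x n) b; rewrite invgK => ->; rewrite zpB1. Qed.

Lemma FBy n : (y^-1 * T' n * y = T' (n - 1) * (T' (-1))^-1)%g.
Proof. by rewrite /T' /=; have := G1 y^-1 (zp y n) b'; rewrite invgK => ->; rewrite zpB1. Qed.

Hypothesis S1 : T 1 = T' 1.
Hypothesis SN : T (-1) = T' (-1).

Lemma cz_up n : T n = T' n -> T (n + 1) = T' (n + 1) -> commute (y^-1 * x)%g (T n).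
Proof.
move=> E0 E1; apply/conjE.
by rewrite FA E1 S1 -FAy E0.
Qed.

Lemma cz_dn n : T n = T' n -> T (n - 1) = T' (n - 1) -> commute (y * x^-1)%g (T n).
Proof.
move=> E0 E1; apply/conjEV.
by rewrite FB E1 SN -FBy E0.
Qed.

Lemma S_up n : T n = T' n -> commute (y^-1 * x)%g (T n) -> T (n + 1) = T' (n + 1).
Proof.
move=> E0 /conjE H.
have : (T (n + 1) = x * T n * x^-1 * T 1)%g by rewrite FA mulgVK.
by rewrite H E0 S1 FAy mulgVK.
Qed.

Lemma S_dn n : T n = T' n -> commute (y * x^-1)%g (T n) -> T (n - 1) = T' (n - 1).
Proof.
move=> E0 /conjEV H.
have : (T (n - 1) = x^-1 * T n * x * T (-1))%g by rewrite FB mulgVK.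
by rewrite H E0 SN FBy mulgVK.
Qed.

Lemma IndA n : T n = T' n.
Proof.
elim/int_ind2: n => //.
- by rewrite /T /T' /= /cm !expg0; gnorm.
- move=> n E0 E1; exact: (S_up E1 (cz_swap' Cxy (cz_dn E1 E0))).
- move=> n E0 E1; exact: (S_dn E1 (cz_swap Cxy (cz_up E1 E0))).
Qed.

Lemma IndA_cz n : commute (y^-1 * x)%g (T n) /\ commute (y * x^-1)%g (T n).
Proof.
have H : commute (y^-1 * x)%g (T n) by apply: cz_up; apply: IndA.
by split => //; apply: cz_swap Cxy H.
Qed.

End IndA.

Section Wrap.
Variable G : groupType.
Implicit Types x y b : G.
Local Open Scope ring_scope.

Lemma IndA' x y b (b' : G) : commute x y ->
  cm (zp x 1) b = cm (zp y 1) b' -> cm (zp x (-1)) b = cm (zp y (-1)) b' ->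
  forall n, cm (zp x n) b = cm (zp y n) b'.
Proof. exact: IndA. Qed.

Lemma IndA_cz' x y b (b' : G) : commute x y ->
  cm (zp x 1) b = cm (zp y 1) b' -> cm (zp x (-1)) b = cm (zp y (-1)) b' ->
  forall n, commute (y^-1 * x)%g (cm (zp x n) b) /\ commute (y * x^-1)%g (cm (zp x n) b).
Proof. exact: IndA_cz. Qed.

Lemma FA' x b n : (x * cm (zp x n) b * x^-1 = cm (zp x (n + 1)) b * (cm (zp x 1) b)^-1)%g.
Proof. exact: FA. Qed.

Lemma FB' x b n : (x^-1 * cm (zp x n) b * x = cm (zp x (n - 1)) b * (cm (zp x (-1)) b)^-1)%g.
Proof. exact: FB. Qed.

End Wrap.

Open Scope group_scope.



Definition sp (G : groupType) (x : G) (e : bool) : G := if e then x else x^-1.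

Lemma cm_comm (G : groupType) (x y : G) : commute x y -> cm x y = 1.
Proof. by move=> H; rewrite /cm H; gnorm. Qed.

Lemma conj_inv (G : groupType) (g a : G) : g * a^-1 * g^-1 = (g * a * g^-1)^-1.
Proof. by gnorm. Qed.

Lemma conj_mul (G : groupType) (g a b : G) : g * (a * b) * g^-1 = (g * a * g^-1) * (g * b * g^-1).
Proof. by gnorm. Qed.

Section Gen.
Variable G : groupType.
Variables X1 X2 Y1 Y2 : G.
Hypothesis C1 : commute X1 Y1.
Hypothesis C2 : commute X2 Y2.
Hypothesis R : forall e1 e2 : bool, cm (sp X1 e1) (sp Y2 e2) = cm (sp Y1 e1) (sp X2 e2).

Local Open Scope ring_scope.
Definition T n m := cm (zp X1 n) (zp Y2 m).
Definition U n m := cm (zp Y2 m) (zp X1 n).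

Lemma sp_zp (x : G) e : sp x e = zp x (if e then 1 else -1).
Proof. by case: e. Qed.

Lemma R' e1 e2 : cm (zp X1 e1) (zp Y2 e2) = cm (zp Y1 e1) (zp X2 e2)
  :> G /\ True.
Abort.

Lemma Step1 (e : bool) m :
  cm (zp X1 (if e then 1 else -1)) (zp Y2 m) = cm (zp Y1 (if e then 1 else -1)) (zp X2 m).
Proof.
rewrite -(cmV (zp Y2 m)) -(cmV (zp X2 m)); congr (_^-1)%g.
set E := (if e then 1 else -1).
have B1 : cm (zp Y2 1) (zp X1 E) = cm (zp X2 1) (zp Y1 E).
  by rewrite -(cmV (zp X1 E)) -(cmV (zp Y1 E)) /E -!sp_zp (R e true).
have BN : cm (zp Y2 (-1)) (zp X1 E) = cm (zp X2 (-1)) (zp Y1 E).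
  by rewrite -(cmV (zp X1 E)) -(cmV (zp Y1 E)) /E -!sp_zp (R e false).
exact: (IndA' (x := Y2) (y := X2) (b := zp X1 E) (b' := zp Y1 E) (commute_sym C2) B1 BN m).
Qed.

Lemma S_all n m : cm (zp X1 n) (zp Y2 m) = cm (zp Y1 n) (zp X2 m).
Proof.
exact: (IndA' (x := X1) (y := Y1) (b := zp Y2 m) (b' := zp X2 m) C1 (Step1 true m) (Step1 false m) n).
Qed.

Lemma CZ1 n m : commute (Y1^-1 * X1)%g (T n m) /\ commute (Y1 * X1^-1)%g (T n m).
Proof.
exact: (IndA_cz' (x := X1) (y := Y1) (b := zp Y2 m) (b' := zp X2 m) C1 (S_all 1 m) (S_all (-1) m) n).
Qed.

Lemma U_S n m : cm (zp Y2 m) (zp X1 n) = cm (zp X2 m) (zp Y1 n).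
Proof. by rewrite -(cmV (zp X1 n)) -(cmV (zp Y1 n)) S_all. Qed.

Lemma CZ2U n m : commute (X2^-1 * Y2)%g (U n m) /\ commute (X2 * Y2^-1)%g (U n m).
Proof.
exact: (IndA_cz' (x := Y2) (y := X2) (b := zp X1 n) (b' := zp Y1 n) (commute_sym C2) (U_S n 1) (U_S n (-1)) m).
Qed.

Lemma TU n m : T n m = ((U n m)^-1)%g.
Proof. by rewrite /T /U cmV. Qed.

Lemma CZ2 n m : commute (X2^-1 * Y2)%g (T n m) /\ commute (X2 * Y2^-1)%g (T n m).
Proof. by rewrite TU; case: (CZ2U n m) => H1 H2; split; apply: commuteV. Qed.

Inductive inT : G -> Prop :=
| inT1 : inT 1%g
| inTT n m : inT (T n m)
| inTM a b : inT a -> inT b -> inT (a * b)%g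
| inTV a : inT a -> inT (a^-1)%g.

Lemma inT_commute (c : G) : (forall n m, commute c (T n m)) -> forall M, inT M -> commute c M.
Proof.
move=> H M; elim => [|n m|a b _ Ha _ Hb|a _ Ha].
- exact: commute1.
- exact: H.
- exact: commuteM.
- exact: commuteV.
Qed.

Lemma inT_conj (g : G) : (forall n m, inT (g * T n m * g^-1)%g) -> forall M, inT M -> inT (g * M * g^-1)%g.
Proof.
move=> H M; elim => [|n m|a b _ Ha _ Hb|a _ Ha].
- by rewrite mulg1 mulgV; apply: inT1.
- exact: H.
- by rewrite conj_mul; apply: inTM.
- by rewrite conj_inv; apply: inTV.
Qed.

Lemma inT_X1 n m : inT (X1 * T n m * X1^-1)%g.
Proof. by rewrite /T FA'; apply: inTM; [apply: inTT|apply: inTV; apply: inTT]. Qed.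

Lemma inT_X1V n m : inT (X1^-1 * T n m * X1^-1^-1)%g.
Proof. by rewrite invgK /T FB'; apply: inTM; [apply: inTT|apply: inTV; apply: inTT]. Qed.

Lemma inT_Y2 n m : inT (Y2 * T n m * Y2^-1)%g.
Proof.
rewrite TU conj_inv /U FA'; apply: inTV; apply: inTM.
  by rewrite -/(U _ _) -(invgK (U _ _)) -TU; apply: inTV; apply: inTT.
by apply: inTV; rewrite -/(U _ _) -(invgK (U _ _)) -TU; apply: inTV; apply: inTT.
Qed.

Lemma inT_Y2V n m : inT (Y2^-1 * T n m * Y2^-1^-1)%g.
Proof.
rewrite TU conj_inv invgK /U FB'; apply: inTV; apply: inTM.
  by rewrite -/(U _ _) -(invgK (U _ _)) -TU; apply: inTV; apply: inTT.
by apply: inTV; rewrite -/(U _ _) -(invgK (U _ _)) -TU; apply: inTV; apply: inTT.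
Qed.

Lemma comm_all M : inT M ->
  [/\ commute (Y1^-1 * X1)%g M, commute (Y1 * X1^-1)%g M,
      commute (X2^-1 * Y2)%g M & commute (X2 * Y2^-1)%g M].
Proof.
move=> HM; split; apply: inT_commute HM => n m.
- by case: (CZ1 n m).
- by case: (CZ1 n m).
- by case: (CZ2 n m).
- by case: (CZ2 n m).
Qed.


Lemma inT_X2 n m : inT (X2 * T n m * X2^-1)%g.
Proof.
have E := (conjE Y2 X2 (T n m)).2 (CZ2 n m).1.
by rewrite -E; apply: inT_Y2.
Qed.

Lemma inT_X2V n m : inT (X2^-1 * T n m * X2^-1^-1)%g.
Proof.
have E := (conjEV Y2 X2 (T n m)).2 (CZ2 n m).2.
by rewrite invgK -E -{2}(invgK Y2); apply: inT_Y2V.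
Qed.

Definition lx (a : 'I_2 * bool) : G := sp (if nat_of_ord a.1 == 0%N then X1 else X2) a.2.
Definition ly (a : 'I_2 * bool) : G := sp (if nat_of_ord a.1 == 0%N then Y1 else Y2) a.2.
Definition ex (w : seq ('I_2 * bool)) : G := foldr (fun a g => lx a * g)%g 1%g w.
Definition ey (w : seq ('I_2 * bool)) : G := foldr (fun a g => ly a * g)%g 1%g w.

Lemma letter_cases (P : 'I_2 * bool -> Prop) :
  (forall e, P (@Ordinal 2 0 isT, e)) -> (forall e, P (@Ordinal 2 1 isT, e)) -> forall a, P a.
Proof.
move=> H0 H1 [[[|[|i]] Hi] e].
- by have -> : Hi = isT by apply: bool_irrelevance.
- by have -> : Hi = isT by apply: bool_irrelevance.
- by [].
Qed.

Lemma inT_conj_lx a M : inT M -> inT (lx a * M * (lx a)^-1)%g.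
Proof.
elim/letter_cases: a => -[]; rewrite /lx /=; apply: inT_conj.
- exact: inT_X1.
- exact: inT_X1V.
- exact: inT_X2.
- exact: inT_X2V.
Qed.

Lemma conv_l a M : inT M -> (lx a * M * (lx a)^-1 = ly a * M * (ly a)^-1)%g.
Proof.
move=> HM; case: (comm_all HM) => c1 c2 c3 c4.
elim/letter_cases: a => -[]; rewrite /lx /ly /=.
- exact/conjE.
- by rewrite !invgK; apply/conjEV.
- by apply: esym; apply/conjE.
- by rewrite !invgK; apply: esym; apply/conjEV.
Qed.

Lemma inT_conj_ly a M : inT M -> inT (ly a * M * (ly a)^-1)%g.
Proof. by move=> HM; rewrite -conv_l //; apply: inT_conj_lx. Qed.

Lemma sp_comm (x y : G) e1 e2 : commute x y -> commute (sp x e1) (sp y e2).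
Proof.
move=> H; case: e1; case: e2 => /=; rewrite ?invgK //.
- exact: commuteV.
- exact/commute_sym/commuteV/commute_sym.
- exact/commuteV/commute_sym/commuteV/commute_sym.
Qed.

Lemma base a b : cm (ly a) (lx b) = cm (lx a) (ly b) /\ inT (cm (lx a) (ly b)).
Proof.
elim/letter_cases: a => e1; elim/letter_cases: b => e2; rewrite /lx /ly /=.
- rewrite !cm_comm; first (split => //; exact: inT1).
  + exact: sp_comm.
  + exact/commute_sym/sp_comm.
- split; first by rewrite R.
  by rewrite !sp_zp; apply: inTT.
- split; first by rewrite -(cmV (sp X1 e2)) -(cmV (sp Y1 e2)) R.
  by rewrite -(cmV (sp Y1 e2)) -R !sp_zp; apply: inTV; apply: inTT.
- rewrite !cm_comm; first (split => //; exact: inT1).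
  + exact: sp_comm.
  + exact/commute_sym/sp_comm.
Qed.

Lemma G3' (g h k : G) : cm (g * h) k = (g * cm h k * g^-1 * cm g k)%g.
Proof. exact: G3. Qed.

Lemma G4' (g h k : G) : cm g (h * k) = (cm g h * (h * cm g k * h^-1))%g.
Proof. by rewrite /cm; gnorm. Qed.

Lemma cm1 (x : G) : cm 1 x = 1%g. Proof. by rewrite /cm; gnorm. Qed.
Lemma cmx1 (x : G) : cm x 1 = 1%g. Proof. by rewrite /cm; gnorm. Qed.

Lemma D1 V b : cm (ey V) (lx b) = cm (ex V) (ly b) /\ inT (cm (ex V) (ly b)).
Proof.
elim: V => [|a V [IH1 IH2]] /=.
  by rewrite !cm1; split => //; apply: inT1.
case: (base a b) => B1 B2.
rewrite !G3' IH1 -conv_l // B1; split => //.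
by apply: inTM => //; apply: inT_conj_lx.
Qed.

Lemma D V W : cm (ey V) (ex W) = cm (ex V) (ey W) /\ inT (cm (ex V) (ey W)).
Proof.
elim: W => [|b W [IH1 IH2]] /=.
  by rewrite !cmx1; split => //; apply: inT1.
case: (D1 V b) => B1 B2.
rewrite !G4' IH1 conv_l // B1; split => //.
by apply: inTM => //; apply: inT_conj_ly.
Qed.

Lemma ly_linv (a : 'I_2 * bool) : ly (linv a) = (ly a)^-1%g.
Proof. by case: a => i [] //=; rewrite /ly /= invgK. Qed.

Lemma lx_linv (a : 'I_2 * bool) : lx (linv a) = (lx a)^-1%g.
Proof. by case: a => i [] //=; rewrite /lx /= invgK. Qed.

Lemma comm_l a : commute (lx a) (ly a).
Proof. by elim/letter_cases: a => e; rewrite /lx /ly /=; apply: sp_comm. Qed.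

Lemma A u : commute (ex u) (ey u).
Proof.
elim: u => [|a u IH] /=; first exact: commute1.
have Cg := comm_l a.
case: (D [:: linv a] u) => H _; move: H; rewrite /= !mulg1 ly_linv lx_linv => H.
rewrite /commute.
have -> : (lx a * ex u * (ly a * ey u) = lx a * ly a * cm (ly a)^-1 (ex u) * (ex u * ey u))%g.
  by rewrite /cm; gnorm.
rewrite H IH /cm Cg; gnorm; by [].
Qed.

Lemma ex_cat u v : ex (u ++ v) = (ex u * ex v)%g.
Proof. by elim: u => [|a u IH] /=; rewrite ?mul1g // IH mulgA. Qed.

Lemma ey_cat u v : ey (u ++ v) = (ey u * ey v)%g.
Proof. by elim: u => [|a u IH] /=; rewrite ?mul1g // IH mulgA. Qed.

Lemma ex_winv u : ex (winv u) = (ex u)^-1%g.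
Proof.
elim: u => [|a u IH]; first by rewrite /= invg1.
by rewrite winv_cons ex_cat IH /= lx_linv mulg1 invgM.
Qed.

Lemma ey_winv u : ey (winv u) = (ey u)^-1%g.
Proof.
elim: u => [|a u IH]; first by rewrite /= invg1.
by rewrite winv_cons ey_cat IH /= ly_linv mulg1 invgM.
Qed.

Lemma Final v w :
  let P := ex w in let Q := ey w in
  let A1 := (ey v * P * (ey v)^-1)%g in let A2 := (ex v * Q * (ex v)^-1)%g in
  let E := (Q^-1 * P)%g in
  [/\ commute P Q, A1 = (A2 * E)%g & (E * A2 = A2 * E)%g].
Proof.
move=> P Q A1 A2 E.
have CPQ : commute P Q by apply: A.
have F2 : A1 = (A2 * E)%g.
  have := (D v w).1; rewrite -/P -/Q => H.
  have -> : A1 = (cm (ey v) P * P)%g by rewrite /A1 /cm; gnorm.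
  by rewrite H /cm /A2 /E; gnorm.
split => //.
have H2 := (D v (winv w)).1; rewrite ex_winv ey_winv -/P -/Q in H2.
rewrite -F2.
have -> : A1 = (P * (cm (ey v) P^-1)^-1)%g by rewrite /A1 /cm; gnorm.
rewrite H2.
have CPQ' : (P * Q^-1 = Q^-1 * P)%g by apply: commuteV.
rewrite /E /A2 /cm; gnorm.
by rewrite CPQ'.
Qed.
End Gen.

Open Scope group_scope.



Definition GX1 := piG x1.
Definition GX2 := piG x2.
Definition GY1 := piG y1.
Definition GY2 := piG y2.

Lemma piG_comm (a b : word 4) : piG (comm a b) = cm (piG a) (piG b).
Proof. by rewrite /comm !piG_cat !piG_winv /cm !mulgA. Qed.

Lemma piG_gpow (a : word 4) e : piG (gpow a e) = sp (piG a) e.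
Proof. by case: e => //=; rewrite piG_winv. Qed.

Lemma piG_rel r : r \in relK -> piG r = 1.
Proof.
move=> /area_le_rel H.
have : eqG r [::] by exists 1%N; rewrite /eqK cats0.
by move/pi_eq.
Qed.

Lemma cm1_commute (G : groupType) (x y : G) : cm x y = 1 -> commute x y.
Proof.
move=> H; rewrite /commute.
have -> : x * y = cm x y * (y * x) by rewrite /cm; gnorm.
by rewrite H mul1g.
Qed.

Lemma GC1 : commute GX1 GY1.
Proof.
apply: cm1_commute; rewrite /GX1 /GY1 -piG_comm; apply: piG_rel.
by rewrite /relK mem_cat mem_head.
Qed.

Lemma GC2 : commute GX2 GY2.
Proof.
apply: cm1_commute; rewrite /GX2 /GY2 -piG_comm; apply: piG_rel.
by rewrite /relK mem_cat inE mem_head orbT.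
Qed.

Lemma GR e1 e2 : cm (sp GX1 e1) (sp GY2 e2) = cm (sp GY1 e1) (sp GX2 e2).
Proof.
have H : piG (comm (gpow x1 e1) (gpow y2 e2) ++ comm (gpow x2 e2) (gpow y1 e1)) = 1.
  apply: piG_rel; rewrite /relK mem_cat; apply/orP; right.
  apply/mapP; exists (e1, e2) => //.
  by case: e1; case: e2.
move: H; rewrite piG_cat !piG_comm !piG_gpow => /eqP.
rewrite mulg_eq1 => /eqP ->.
by rewrite cmV.
Qed.

Lemma piG_subst (w : word 2) (u1 u2 : word 4) :
  piG (subst w u1 u2) = ex (piG u1) (piG u2) w.
Proof.
elim: w => [|a w IH] //=.
rewrite /subst /= -/(subst w u1 u2) piG_cat IH; congr (_ * _).
rewrite /lx; case: a => i e /=; case: e; case: (nat_of_ord i == 0) => //=; by rewrite piG_winv.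
Qed.

Lemma piG_subst_y (w : word 2) (u1 u2 : word 4) :
  piG (subst w u1 u2) = ey (piG u1) (piG u2) w.
Proof.
elim: w => [|a w IH] //=.
rewrite /subst /= -/(subst w u1 u2) piG_cat IH; congr (_ * _).
rewrite /ly; case: a => i e /=; case: e; case: (nat_of_ord i == 0) => //=; by rewrite piG_winv.
Qed.

Definition Good (v w : word 2) (k : nat) : Prop :=
  let P := subst w x1 x2 in let Q := subst w y1 y2 in
  let A1 := subst v y1 y2 ++ P ++ winv (subst v y1 y2) in
  let A2 := subst v x1 x2 ++ Q ++ winv (subst v x1 x2) in
  let E := winv Q ++ P in
  [/\ eqK k (P ++ Q) (Q ++ P), eqK k A1 (A2 ++ E) & eqK k (E ++ A2) (A2 ++ E)].

Lemma Good_mono v w k k' : k <= k' -> Good v w k -> Good v w k'.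
Proof.
by move=> le [H1 H2 H3]; split; apply: eqK_mono le _.
Qed.

Lemma Good_ex v w : exists k, Good v w k.
Proof.
case: (Final GC1 GC2 GR v w) => H1 H2 H3.
have [k1 K1] : eqG (subst w x1 x2 ++ subst w y1 y2) (subst w y1 y2 ++ subst w x1 x2).
  apply: piG_eqG; rewrite !piG_cat (piG_subst w x1 x2) (piG_subst_y w y1 y2); exact: H1.
have [k2 K2] : eqG (subst v y1 y2 ++ subst w x1 x2 ++ winv (subst v y1 y2))
     ((subst v x1 x2 ++ subst w y1 y2 ++ winv (subst v x1 x2)) ++ (winv (subst w y1 y2) ++ subst w x1 x2)).
  apply: piG_eqG; rewrite !piG_cat !piG_winv ?(piG_subst v x1 x2) ?(piG_subst w x1 x2) ?(piG_subst_y v y1 y2) ?(piG_subst_y w y1 y2) !mulgA; move: H2.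
  by rewrite !mulgA.
have [k3 K3] : eqG ((winv (subst w y1 y2) ++ subst w x1 x2) ++ (subst v x1 x2 ++ subst w y1 y2 ++ winv (subst v x1 x2)))
     ((subst v x1 x2 ++ subst w y1 y2 ++ winv (subst v x1 x2)) ++ (winv (subst w y1 y2) ++ subst w x1 x2)).
  apply: piG_eqG; rewrite !piG_cat !piG_winv ?(piG_subst v x1 x2) ?(piG_subst w x1 x2) ?(piG_subst_y v y1 y2) ?(piG_subst_y w y1 y2) !mulgA; move: H3.
  by rewrite !mulgA.
exists (k1 + k2 + k3); split.
- by apply: eqK_mono K1; rewrite -addnA leq_addr.
- by apply: eqK_mono K2; rewrite addnAC leq_addl.
- by apply: eqK_mono K3; rewrite leq_addl.
Qed.

Open Scope group_scope.

Fixpoint allw (k : nat) : seq (word 2) :=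
  match k with
  | 0 => [:: [::]]
  | k'.+1 => [::] :: [seq a :: w | a <- enum {: letter 2}, w <- allw k']
  end.

Lemma allw_mem k (w : word 2) : size w <= k -> w \in allw k.
Proof.
elim: k w => [|k IH] [|a w] //= H.
rewrite inE; apply/orP; right.
apply: (allpairs_f (fun a w => a :: w)); first by rewrite mem_enum.
exact: IH.
Qed.

Lemma seq_bound (T : eqType) (s : seq T) (P : T -> nat -> Prop) :
  (forall x k k', k <= k' -> P x k -> P x k') ->
  (forall x, x \in s -> exists k, P x k) -> exists K, forall x, x \in s -> P x K.
Proof.
move=> Hm; elim: s => [|y s IH] H; first by exists 0.
case: IH => [x xs|K HK]; first by apply: H; rewrite inE xs orbT.
case: (H y (mem_head _ _)) => k Hk.
exists (K + k) => x; rewrite inE => /orP[/eqP ->|xs].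
  by apply: Hm Hk; apply: leq_addl.
by apply: Hm (HK x xs); apply: leq_addr.
Qed.

Lemma Good_unif m : exists K, forall v w : word 2, size v <= m -> size w <= m -> Good v w K.
Proof.
have := @seq_bound _ [seq (v, w) | v <- allw m, w <- allw m] (fun p k => Good p.1 p.2 k).
case=> [p k k' le|p _|K HK]; first exact: Good_mono.
  exact: Good_ex.
exists K => v w Hv Hw.
apply: (HK (v, w)).
by apply: (allpairs_f pair); apply: allw_mem.
Qed.

Close Scope group_scope.
Section SecP8.

Implicit Types (u v w g a b : word 4).

Lemma wpowS u N : wpow u N.+1 = u ++ wpow u N. Proof. by []. Qed.

Lemma wpow_r u N : wpow u N ++ u = u ++ wpow u N.
Proof. by elim: N => [|N IH] /=; rewrite ?cats0 // -catA IH. Qed.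

Lemma wpow_winv u N : winv (wpow u N) = wpow (winv u) N.
Proof.
elim: N => [|N IH] //=.
by rewrite winv_cat IH wpow_r.
Qed.

Lemma winv_comm a b : winv (comm a b) = comm b a.
Proof. by rewrite /comm !winv_cat !winvK !catA. Qed.

Lemma conj_wpow g u N : feq (g ++ wpow u N ++ winv g) (wpow (g ++ u ++ winv g) N).
Proof.
elim: N => [|N IH] /=; first exact: feq_cancel.
apply: (@feq_trans _ _ ((g ++ u ++ winv g) ++ (g ++ wpow u N ++ winv g))).
  have := @feq_insl' _ (g ++ u) g (wpow u N ++ winv g).
  by rewrite -!catA => H; apply: feq_sym.
exact: feq_cat.
Qed.

Lemma pow_comm_step c a b N : eqK c (b ++ a) (a ++ b) ->
  eqK (N * c) (wpow b N ++ a) (a ++ wpow b N).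
Proof.
move=> H; elim: N => [|N IH] /=; first by rewrite cats0; apply: eqK_refl.
rewrite mulSn addnC -catA.
have H1 := eqK_catl b IH.
have H2 := eqK_catr (wpow b N) H.
rewrite -catA in H2; rewrite catA.
by have := eqK_trans H1 H2; rewrite !catA.
Qed.

Lemma pow_comm c a b N : eqK c (b ++ a) (a ++ b) ->
  eqK (N * N * c) (wpow (a ++ b) N) (wpow a N ++ wpow b N).
Proof.
move=> H; elim: N => [|N IH]; first exact: eqK_refl.
have H1 := eqK_catl (a ++ b) IH.
have H2 := eqK_sym (pow_comm_step N (eqK_sym H)).
have H3 := eqK_catr (wpow b N) (eqK_catl a H2).
rewrite -!catA in H1 H3.
rewrite !wpowS -!catA.
apply: eqK_mono (eqK_trans H1 H3).
by nia.
Qed.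

Lemma comm_inv c P Q : eqK c (P ++ Q) (Q ++ P) -> eqK c (P ++ winv Q) (winv Q ++ P).
Proof.
move=> H.
have H1 := eqK_catr (winv Q) (eqK_catl (winv Q) H).
apply: eqK_sym.
apply: eqK_feq_trans (eqK_trans_feq H1 _).
  have := @feq_insl _ (winv Q ++ P) Q [::]; rewrite !cats0 -!catA => F.
  by apply: feq_sym.
by have := @feq_insl' _ [::] Q (P ++ winv Q); rewrite /= -!catA.
Qed.

Lemma chain k (Vy Vx P Q : word 4) N :
  let A1 := Vy ++ P ++ winv Vy in
  let A2 := Vx ++ Q ++ winv Vx in
  let E := winv Q ++ P in
  eqK k (P ++ Q) (Q ++ P) -> eqK k A1 (A2 ++ E) -> eqK k (E ++ A2) (A2 ++ E) ->
  area_le (comm Vy (wpow P N) ++ winv (comm Vx (wpow Q N))) (3 * k * N ^ 2).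
Proof.
move=> A1 A2 E H1 H2 H3.
set W := comm Vy (wpow P N) ++ winv (comm Vx (wpow Q N)).
have S0 : feq W (wpow A1 N ++ (winv (wpow P N) ++ (wpow Q N ++ winv (wpow A2 N)))).
  rewrite /W winv_comm /comm.
  have -> : (Vy ++ wpow P N ++ winv Vy ++ winv (wpow P N)) ++ (wpow Q N ++ Vx ++ winv (wpow Q N) ++ winv Vx)
    = (Vy ++ wpow P N ++ winv Vy) ++ (winv (wpow P N) ++ (wpow Q N ++ (Vx ++ winv (wpow Q N) ++ winv Vx))).
    by rewrite -!catA.
  apply: feq_cat; first exact: conj_wpow.
  apply: feq_cat => //; apply: feq_cat => //.
  have := feq_winv (conj_wpow Vx Q N); rewrite !winv_cat !winvK -!catA.
  exact.
have S1 := eqK_wpow N H2.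
have S2 := pow_comm N H3.
have S3 := pow_comm N (comm_inv H1).
have S23 := eqK_trans S2 (eqK_catl (wpow A2 N) S3).
have S := eqK_trans S1 S23.
have SW := eqK_catr (winv (wpow P N) ++ (wpow Q N ++ winv (wpow A2 N))) S.
have : eqK (N * k + (N * N * k + N * N * k)) W [::].
  apply: eqK_feq_trans S0 (eqK_trans_feq SW _).
  rewrite -wpow_winv -!catA.
  have := @feq_insl _ (wpow A2 N ++ winv (wpow Q N)) (wpow P N) (wpow Q N ++ winv (wpow A2 N)).
  rewrite -!catA => F; apply: feq_trans F _.
  have := @feq_insl' _ (wpow A2 N) (wpow Q N) (winv (wpow A2 N)).
  rewrite -!catA => F; apply: feq_trans F _.
  by have := @feq_cancel _ (wpow A2 N).
rewrite /eqK cats0 => HW; apply: area_le_mono HW.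
have h : forall n, n * k <= n * n * k by case=> [|n] //; rewrite -mulnA leq_pmull.
have := h N; rewrite expnS expn1; lia.
Qed.

End SecP8.

Close Scope group_scope.


Theorem lemma4p4 (m : nat) :
  exists C : nat, 0 < C /\
    forall (v w : word 2), size v <= m -> size w <= m ->
    forall N : nat,
      let W := comm (subst v y1 y2) (wpow (subst w x1 x2) N) ++
               winv (comm (subst v x1 x2) (wpow (subst w y1 y2) N)) in
      trivial_in_K W /\ area_le W (C * N ^ 2).
Proof.
case: (Good_unif m) => K HK.
exists (3 * K + 1); split; first by rewrite addn1.
move=> v w Hv Hw N W.
case: (HK v w Hv Hw) => H1 H2 H3.
have A := chain N H1 H2 H3.
split; first by exists (3 * K * N ^ 2).
apply: area_le_mono A.
by rewrite mulnDl leq_addr.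
Qed.
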